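(* In the setting described in the context, given $\epsilon>0$ there is an integer $N(\epsilon)>0$ such that for every $K^u_\alpha$ curve $\gamma$ in $Q$, $$\rho_\gamma\Big(\gamma\cap\bigcup_{i\ge N(\epsilon)}E_i\Big)<\epsilon.$$
   Context: Let $Q=[0,1]^2$. Fix $0<\alpha<1$, $K^u_\alpha=\{(v_1,v_2):|v_2|\le\alpha|v_1|\}$; a $K^u_\alpha$ curve is a $C^2$ curve with all tangent vectors in $K^u_\alpha$; $\rho_\gamma$ is Riemannian (arc length) measure on $\gamma$. Let $E_1,E_2,\dots$ be a countable collection of closed curvilinear rectangles in $Q$, each bounded above and below by subintervals of $\{y=1\}$, $\{y=0\}$ and on the left and right by graphs $x=x^{(i)}(y)$ of smooth functions with $|dx^{(i)}/dy|\le\alpha$. For $z\in Q$, $\ell_z$ is the horizontal line through $z$, $\delta_z(E)=\operatorname{diam}(\ell_z\cap E)$, $\delta_{i,\max}=\max_{z\in Q}\delta_z(E_i)$, $\delta_{i,\min}=\min_{z\in Q}\delta_z(E_i)$. Assume (G1) $\operatorname{int}E_i\cap\operatorname{int}E_j=\emptyset$ for $i\ne j$; (G2) $Q\setminus\bigcup_i\operatorname{int}E_i$ has Lebesgue measure $0$; (G3) $-\sum_i\delta_{i,\max}\log\delta_{i,\min}<\infty$. (In the paper these posts are the domains of $C^2$ diffeomorphisms $f_i$ satisfying further hyperbolicity and distortion conditions, which are not needed to state this result.) *)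

(* Defs.v *)
From HB Require Import structures.
From mathcomp Require Import all_boot all_order all_algebra.
From mathcomp Require Import all_classical all_reals all_analysis.
Set Implicit Arguments.
Unset Strict Implicit.
Unset Printing Implicit Defensive.
Import Order.TTheory GRing.Theory Num.Theory.
Import numFieldNormedType.Exports.
Local Open Scope classical_set_scope.
Local Open Scope ring_scope.

Section Defs.
Variable R : realType.

Definition Qsq : set (R * R) := [set p | 0 <= p.1 <= 1 /\ 0 <= p.2 <= 1].

Definition d1 (f : R -> R) : R -> R := @derive1 R R f.

Definition smooth (f : R -> R) : Prop :=
  forall (n : nat) (t : R), derivable (iter n d1 f) t 1.

Definition C2_on (s0 s1 : R) (f : R -> R) : Prop :=
  forall t, s0 < t < s1 ->
    [/\ derivable f t 1, derivable (d1 f) t 1 & {for t, continuous (d1 (d1 f))}].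

Definition curvrect (a b : R -> R) : set (R * R) :=
  [set p | 0 <= p.2 <= 1 /\ a p.2 <= p.1 <= b p.2].

Definition rect_sides (alpha : R) (a b : R -> R) : Prop :=
  [/\ smooth a, smooth b,
      (forall y, 0 <= y <= 1 -> `|d1 a y| <= alpha /\ `|d1 b y| <= alpha)
    & (forall y, 0 <= y <= 1 -> 0 <= a y /\ a y < b y /\ b y <= 1)].

Definition dist2 (p q : R * R) : R :=
  Num.sqrt ((p.1 - q.1) ^+ 2 + (p.2 - q.2) ^+ 2).
Definition diam2 (S : set (R * R)) : R :=
  sup [set dist2 pq.1 pq.2 | pq in S `*` S].

Definition hline (z : R * R) : set (R * R) := [set p | p.2 = z.2].

Definition delta (z : R * R) (E : set (R * R)) : R := diam2 (hline z `&` E).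
Definition delta_max (E : set (R * R)) : R := sup [set delta z E | z in Qsq].
Definition delta_min (E : set (R * R)) : R := inf [set delta z E | z in Qsq].

Definition Kcone (alpha : R) (v : R * R) : Prop := `|v.2| <= alpha * `|v.1|.

Definition Ku_curve (alpha s0 s1 : R) (gx gy : R -> R) : Prop :=
  [/\ s0 < s1, C2_on s0 s1 gx, C2_on s0 s1 gy &
      forall t, s0 < t < s1 ->
        [/\ Qsq (gx t, gy t),
            (d1 gx t, d1 gy t) != 0 &
            Kcone alpha (d1 gx t, d1 gy t)]].

Definition arc_measure (s0 s1 : R) (gx gy : R -> R) (A : set (R * R)) : \bar R :=
  (\int[@lebesgue_measure R]_(t in `]s0, s1[ `&` [set t | A (gx t, gy t)])
     (Num.sqrt (d1 gx t ^+ 2 + d1 gy t ^+ 2))%:E)%E.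

End Defs.

(* Main.v *)
Require Import Defs.
From HB Require Import structures.
From mathcomp Require Import all_boot all_order all_algebra.
From mathcomp Require Import all_classical all_reals all_analysis.
From mathcomp Require Import ring lra measurable_realfun.
Import Order.TTheory GRing.Theory Num.Theory.
Import numFieldNormedType.Exports.
Local Open Scope classical_set_scope.
Local Open Scope ring_scope.
Set Implicit Arguments.
Unset Strict Implicit.
Unset Printing Implicit Defensive.

Section P1.
Variable R : realType.
Implicit Types (f g : R -> R) (x t v : R).

Definition inO (s0 s1 x : R) := s0 < x < s1.

Lemma der_cont f x : derivable f x 1 -> {for x, continuous f}.
Proof. by move=> h; apply: differentiable_continuous; apply/derivable1_diffP. Qed.

Lemma der_is f x : derivable f x 1 -> is_derive x 1 f (d1 f x).
Proof. by move=> h; rewrite /d1 derive1E; apply: derivableP. Qed.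

Lemma mvt_ge0 (F dF : R -> R) t v : t <= v ->
  (forall x, t <= x <= v -> is_derive x 1 F (dF x)) ->
  (forall x, t < x < v -> 0 <= dF x) -> F t <= F v.
Proof.
rewrite le_eqVlt => /predU1P[-> //|tv] hd hp.
have := @MVT R F dF t v tv.
case.
- by move=> x; rewrite in_itv /= => /andP[h1 h2]; apply: hd; rewrite !ltW.
- apply: continuous_in_subspaceT => x; rewrite inE /= in_itv /= => /andP[h1 h2].
  apply: der_cont; have := hd x; rewrite h1 h2 => /(_ isT) h.
  by apply: (@ex_derive _ _ _ _ _ _ _ h).
- move=> c; rewrite in_itv /= => /andP[h1 h2] e.
  rewrite -subr_ge0 e; apply: mulr_ge0; first by apply: hp; rewrite h1 h2.
  by rewrite subr_ge0 ltW.
Qed.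

End P1.

Set Implicit Arguments.
Unset Strict Implicit.
Unset Printing Implicit Defensive.

Section P2.
Variable R : realType.
Implicit Types (f g h : R -> R) (x t v : R).

Lemma ivt_sign h s0 s1 x0 x : s0 < x0 < s1 -> s0 < x < s1 ->
  (forall y, s0 < y < s1 -> {for y, continuous h}) ->
  (forall y, s0 < y < s1 -> h y != 0) -> 0 < h x0 -> 0 < h x.
Proof.
move=> /andP[a0 a1] /andP[b0 b1] hc hn hx0.
rewrite ltNge; apply/negP => hx.
have gen : forall a b, s0 < a -> b < s1 -> a <= b ->
   Num.min (h a) (h b) <= 0 <= Num.max (h a) (h b) -> False.
  move=> a b sa bs ab hab.
  have hcab : {within `[a, b], continuous h}.
    apply: continuous_in_subspaceT => y; rewrite inE /= in_itv /= => /andP[y1 y2].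
    by apply: hc; rewrite (lt_le_trans sa y1) (le_lt_trans y2 bs).
  have [c] := IVT ab hcab hab.
  rewrite in_itv /= => /andP[c1 c2] hc0.
  by move: (hn c); rewrite hc0 eqxx (lt_le_trans sa c1) (le_lt_trans c2 bs) => /(_ isT).
case: (leP x0 x) => hle.
- apply: (gen x0 x a0 b1 hle).
  by rewrite ge_min hx orbT /= le_max (ltW hx0).
- apply: (gen x x0 b0 a1 (ltW hle)).
  by rewrite ge_min hx /= le_max (ltW hx0) orbT.
Qed.

Section Curve.
Variables (alpha s0 s1 : R) (gx gy : R -> R).
Hypothesis al : 0 < alpha < 1.
Hypothesis hK : Ku_curve alpha s0 s1 gx gy.


Lemma K_lt : s0 < s1. Proof. by case: hK. Qed.
Lemma K_dx x : inO s0 s1 x -> derivable gx x 1.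
Proof. by case: hK => _ h _ _ /h []. Qed.
Lemma K_dy x : inO s0 s1 x -> derivable gy x 1.
Proof. by case: hK => _ _ h _ /h []. Qed.
Lemma K_cdx x : inO s0 s1 x -> {for x, continuous (d1 gx)}.
Proof. by case: hK => _ h _ _ /h [] _ /der_cont. Qed.
Lemma K_cdy x : inO s0 s1 x -> {for x, continuous (d1 gy)}.
Proof. by case: hK => _ _ h _ /h [] _ /der_cont. Qed.
Lemma K_Q x : inO s0 s1 x -> Qsq (gx x, gy x).
Proof. by case: hK => _ _ _ h /h []. Qed.
Lemma K_cone x : inO s0 s1 x -> `|d1 gy x| <= alpha * `|d1 gx x|.
Proof. by case: hK => _ _ _ h /h []. Qed.
Lemma K_nz x : inO s0 s1 x -> d1 gx x != 0.
Proof.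
move=> hx; apply/negP => /eqP h0.
case: hK => _ _ _ /(_ x hx) [_ + hc].
move: hc; rewrite /Kcone /= h0 normr0 mulr0 normr_le0 => /eqP ->.
by rewrite eqxx.
Qed.

Lemma K_sign : exists sg : R, `|sg| = 1 /\ forall x, inO s0 s1 x -> 0 < sg * d1 gx x.
Proof.
have hs := K_lt.
set x0 := (s0 + s1) / 2.
have hx0 : inO s0 s1 x0.
  by rewrite /inO /x0; apply/andP; split; lra.
have hn0 := K_nz hx0.
have [hp|hn] := ltP 0 (d1 gx x0).
- exists 1; split; first by rewrite normr1.
  move=> x hx; rewrite mul1r; apply: (@ivt_sign (d1 gx) s0 s1 x0 x hx0 hx) => //.
  + by move=> y hy; apply: K_cdx.
  + by move=> y hy; apply: K_nz.
- exists (-1); split; first by rewrite normrN normr1.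
  move=> x hx; apply: (@ivt_sign (fun y => -1 * d1 gx y) s0 s1 x0 x hx0 hx).
  + move=> y hy; apply: continuousM; first exact: cst_continuous.
    exact: K_cdx.
  + by move=> y hy; rewrite mulN1r oppr_eq0; apply: K_nz.
  + by rewrite mulN1r oppr_gt0 lt_neqAle hn andbT.
Qed.

End Curve.
End P2.

Set Implicit Arguments.
Unset Strict Implicit.
Unset Printing Implicit Defensive.

Section P3.
Variable R : realType.
Implicit Types (f g h : R -> R) (x t v : R).

Lemma is_der_lin f g df dg (k l x : R) : is_derive x 1 f df -> is_derive x 1 g dg ->
  is_derive x 1 (fun y => k * f y + l * g y) (k * df + l * dg).
Proof.
move=> hf hg.
exact: (is_deriveD (is_deriveZ k hf) (is_deriveZ l hg)).
Qed.

Lemma is_der_aff (g : R -> R) dg (k l x : R) : is_derive x 1 g dg ->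
  is_derive x 1 (fun y => k * y + l * g y) (k + l * dg).
Proof.
move=> hg; have := @is_der_lin id g 1 dg k l x (is_derive_id x 1) hg.
by rewrite mulr1.
Qed.

Lemma lip_side (alpha : R) (a : R -> R) : smooth a ->
  (forall y, 0 <= y <= 1 -> `|d1 a y| <= alpha) ->
  forall p q, 0 <= p <= 1 -> 0 <= q <= 1 -> `|a q - a p| <= alpha * `|q - p|.
Proof.
move=> sa ha.
have da : forall y : R, is_derive y (1:R) a (d1 a y) by move=> y; apply: der_is; exact: (sa 0%N y).
have key : forall p q, 0 <= p -> p <= q -> q <= 1 -> `|a q - a p| <= alpha * `|q - p|.
  move=> p q p0 pq q1.
  have hq : `|q - p| = q - p by rewrite ger0_norm // subr_ge0.
  rewrite hq ler_norml; apply/andP; split.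
  - have h : alpha * p + 1 * a p <= alpha * q + 1 * a q.
      apply: (@mvt_ge0 R (fun y => alpha * y + 1 * a y) (fun y => alpha + 1 * d1 a y) p q pq).
      + by move=> x _; apply: is_der_aff.
      + move=> x /andP[h1 h2].
        have hx : 0 <= x <= 1.
          by apply/andP; split; apply: ltW; [exact: le_lt_trans p0 h1 | exact: lt_le_trans h2 q1].
        by have := ha x hx; rewrite ler_norml => /andP[h3 h4]; lra.
    lra.
  - have h : alpha * p + (-1) * a p <= alpha * q + (-1) * a q.
      apply: (@mvt_ge0 R (fun y => alpha * y + (-1) * a y) (fun y => alpha + (-1) * d1 a y) p q pq).
      + by move=> x _; apply: is_der_aff.
      + move=> x /andP[h1 h2].
        have hx : 0 <= x <= 1.
          by apply/andP; split; apply: ltW; [exact: le_lt_trans p0 h1 | exact: lt_le_trans h2 q1].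
        by have := ha x hx; rewrite ler_norml => /andP[h3 h4]; lra.
    lra.
move=> p q /andP[p0 p1] /andP[q0 q1].
case: (leP p q) => pq; first exact: key.
by rewrite distrC [`|q - p|]distrC; apply: key => //; rewrite ltW.
Qed.

Section Curve.
Variables (alpha s0 s1 : R) (gx gy : R -> R).
Hypothesis al : 0 < alpha < 1.
Hypothesis hK : Ku_curve alpha s0 s1 gx gy.
Variable sg : R.
Hypothesis hsg1 : `|sg| = 1.
Hypothesis hsg : forall x, inO s0 s1 x -> 0 < sg * d1 gx x.

Lemma sg_abs x : inO s0 s1 x -> sg * d1 gx x = `|d1 gx x|.
Proof.
move=> hx; have := hsg hx => h.
by rewrite -[LHS]gtr0_norm // normrM hsg1 mul1r.
Qed.

Lemma ltW_and t v x : t < x < v -> t <= x <= v.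
Proof. by move=> /andP[h1 h2]; rewrite !ltW. Qed.

Lemma inO_seg t v x : inO s0 s1 t -> inO s0 s1 v -> t <= x <= v -> inO s0 s1 x.
Proof.
rewrite /inO => /andP[t0 t1] /andP[v0 v1] /andP[h1 h2].
by rewrite (lt_le_trans t0 h1) (le_lt_trans h2 v1).
Qed.

Lemma mono_x t v : inO s0 s1 t -> inO s0 s1 v -> t <= v -> sg * gx t <= sg * gx v.
Proof.
move=> ht hv tv.
have h : sg * gx t + 0 * gy t <= sg * gx v + 0 * gy v.
  apply: (@mvt_ge0 R (fun y => sg * gx y + 0 * gy y) (fun y => sg * d1 gx y + 0 * d1 gy y) t v tv).
  - move=> x hx; have hO := inO_seg ht hv hx.
    by apply: is_der_lin; apply: der_is; [exact: (K_dx hK) | exact: (K_dy hK)].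
  - move=> x hx; have hO := inO_seg ht hv (ltW_and hx).
    by rewrite mul0r addr0 ltW // hsg.
by move: h; rewrite !mul0r !addr0.
Qed.


Lemma lip_y t v : inO s0 s1 t -> inO s0 s1 v -> t <= v ->
  `|gy v - gy t| <= alpha * (sg * (gx v - gx t)).
Proof.
move=> ht hv tv.
have pos : forall x, inO s0 s1 x -> `|d1 gy x| <= alpha * (sg * d1 gx x).
  by move=> x hx; rewrite sg_abs //; apply: (K_cone hK).
have der : forall k l x, t <= x <= v ->
    is_derive x 1 (fun y => k * gx y + l * gy y) (k * d1 gx x + l * d1 gy x).
  move=> k l x hx; have hO := inO_seg ht hv hx.
  by apply: is_der_lin; apply: der_is; [exact: (K_dx hK) | exact: (K_dy hK)].
have h1 : alpha * sg * gx t + (-1) * gy t <= alpha * sg * gx v + (-1) * gy v.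
  apply: (@mvt_ge0 R (fun y => alpha * sg * gx y + (-1) * gy y) (fun x => alpha * sg * d1 gx x + (-1) * d1 gy x) t v tv).
  - move=> x hx; have hO := inO_seg ht hv (ltW_and hx).
    have := pos x hO; rewrite ler_norml => /andP[h3 h4].
    have e : alpha * sg * d1 gx x = alpha * (sg * d1 gx x) by rewrite mulrA.
    by rewrite e; lra.
have h2 : alpha * sg * gx t + 1 * gy t <= alpha * sg * gx v + 1 * gy v.
  apply: (@mvt_ge0 R (fun y => alpha * sg * gx y + 1 * gy y) (fun x => alpha * sg * d1 gx x + 1 * d1 gy x) t v tv).
  - move=> x hx; have hO := inO_seg ht hv (ltW_and hx).
    have := pos x hO; rewrite ler_norml => /andP[h3 h4].
    have e : alpha * sg * d1 gx x = alpha * (sg * d1 gx x) by rewrite mulrA.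
    by rewrite e; lra.
have e : alpha * (sg * (gx v - gx t)) = alpha * sg * gx v - alpha * sg * gx t by ring.
rewrite e ler_norml; apply/andP; split; lra.
Qed.

Lemma lip_y_abs t v : inO s0 s1 t -> inO s0 s1 v ->
  `|gy v - gy t| <= alpha * `|gx v - gx t|.
Proof.
have al0 : 0 <= alpha by case/andP: al => h _; exact: ltW.
have gen : forall t v, inO s0 s1 t -> inO s0 s1 v -> t <= v ->
    `|gy v - gy t| <= alpha * `|gx v - gx t|.
  move=> t' v' ht hv tv; apply: (le_trans (lip_y ht hv tv)).
  apply: ler_wpM2l => //.
  by rewrite (le_trans (ler_norm _)) // normrM hsg1 mul1r.
move=> ht hv; case: (leP t v) => tv; first exact: gen.
by rewrite distrC [`|gx v - gx t|]distrC; apply: gen => //; rewrite ltW.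
Qed.

Lemma rect_bound (a b : R -> R) (W : R) :
  (forall p q, 0 <= p <= 1 -> 0 <= q <= 1 -> `|a q - a p| <= alpha * `|q - p|) ->
  (forall y, 0 <= y <= 1 -> b y - a y <= W) ->
  forall t v, inO s0 s1 t -> inO s0 s1 v ->
    curvrect a b (gx t, gy t) -> curvrect a b (gx v, gy v) ->
    (1 - alpha ^+ 2) * `|gx v - gx t| <= W.
Proof.
move=> la hW.
have al0 : 0 <= alpha by case/andP: al => h _; exact: ltW.
have gen : forall t v, inO s0 s1 t -> inO s0 s1 v ->
    curvrect a b (gx t, gy t) -> curvrect a b (gx v, gy v) -> gx t <= gx v ->
    (1 - alpha ^+ 2) * `|gx v - gx t| <= W.
  move=> t v ht hv [/= yt /andP[at1 bt1]] [/= yv /andP[av1 bv1]] le.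
  have hd : `|gx v - gx t| = gx v - gx t by rewrite ger0_norm // subr_ge0.
  have h1 := hW _ yv.
  have h2 := la _ _ yt yv.
  have h3 := lip_y_abs ht hv.
  have h4 : alpha * `|gy v - gy t| <= alpha * (alpha * `|gx v - gx t|).
    by apply: ler_wpM2l.
  have h5 : a (gy v) - a (gy t) <= alpha * `|gy v - gy t|.
    exact: le_trans (ler_norm _) h2.
  have e : (1 - alpha ^+ 2) * `|gx v - gx t| =
     `|gx v - gx t| - alpha * (alpha * `|gx v - gx t|) by ring.
  rewrite e; rewrite hd in h4 *; lra.
move=> t v ht hv Et Ev; case: (leP (gx t) (gx v)) => le; first exact: gen.
by rewrite distrC; apply: gen => //; rewrite ltW.
Qed.

End Curve.
End P3.

Set Implicit Arguments.
Unset Strict Implicit.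
Unset Printing Implicit Defensive.

Section P4.
Variable R : realType.
Notation mu := (@lebesgue_measure R).
Implicit Types (f g h : R -> R) (x t v : R).

Lemma cont_eps f x e : {for x, continuous f} -> 0 < e ->
  exists2 d, 0 < d & forall y, `|x - y| < d -> `|f x - f y| < e.
Proof.
move=> cf e0.
have /cvgrPdist_lt/(_ e e0) := cf.
move=> /nbhs_ballP [d d0 hd]; exists d => // y xy.
Qed.

Lemma ltW_and' t v x : t < x < v -> t <= x <= v.
Proof. by move=> /andP[h1 h2]; rewrite !ltW. Qed.

Section LemI.
Variables (s0 s1 c : R) (G g : R -> R) (S : set R).
Hypothesis s01 : s0 < s1.
Hypothesis hG : forall x, inO s0 s1 x -> is_derive x 1 G (g x).
Hypothesis hgc : forall x, inO s0 s1 x -> {for x, continuous g}.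
Hypothesis hg0 : forall x, inO s0 s1 x -> 0 <= g x.
Hypothesis mS : measurable (`]s0, s1[ `&` S).
Hypothesis hS : forall t v, inO s0 s1 t -> inO s0 s1 v -> S t -> S v -> t <= v ->
  G v - G t <= c.
Hypothesis c0 : 0 <= c.

Lemma inO_itv x : inO s0 s1 x <-> (`]s0, s1[%classic : set R) x.
Proof. by rewrite /= in_itv /=. Qed.

Lemma mg : measurable_fun `]s0, s1[%classic (EFin \o g).
Proof.
apply/measurable_EFinP; apply: open_continuous_measurable_fun; first exact: itv_open.
by move=> x; rewrite inE => /inO_itv; apply: hgc.
Qed.

Lemma I1 u w : s0 < u -> u <= w -> w < s1 ->
  (\int[mu]_(x in (`]s0, s1[ `&` S) `&` `[u, w]) (g x)%:E <= c%:E)%E.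
Proof.
move=> su uw ws.
set T := (`]s0, s1[ `&` S) `&` `[u, w].
have mT : measurable T by apply: measurableI => //; exact: measurable_itv.
have inOu : forall x, u <= x <= w -> inO s0 s1 x.
  by move=> x /andP[h1 h2]; rewrite /inO (lt_le_trans su h1) (le_lt_trans h2 ws).
have Tin : forall x, T x -> [/\ inO s0 s1 x, S x & u <= x <= w].
  move=> x [[_ Sx]]; rewrite /= in_itv /= => hx; split => //; exact: inOu.
case: (pselect (exists x, T x)) => [[x0 Tx0]|hne]; last first.
  have -> : T = set0.
    by apply/seteqP; split => x // Tx; exfalso; apply: hne; exists x.
  by rewrite integral_set0 lee_fin.
have lbT : has_lbound T by exists u => x /Tin [_ _ /andP[]].
have ubT : has_ubound T by exists w => x /Tin [_ _ /andP[]].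
have neT : T !=set0 by exists x0.
set m := inf T; set M := sup T.
have mle : forall x, T x -> m <= x by move=> x Tx; apply: ge_inf.
have Mge : forall x, T x -> x <= M by move=> x Tx; apply: ub_le_sup.
have um : u <= m by apply: lb_le_inf => // x /Tin [_ _ /andP[]].
have Mw : M <= w by apply: ge_sup => // x /Tin [_ _ /andP[]].
have mM : m <= M by apply: (le_trans (mle _ Tx0)); exact: Mge.
have subT : T `<=` `[m, M].
  by move=> x Tx; rewrite /= in_itv /= mle // Mge.
have sub1 : `[m, M] `<=` `]s0, s1[.
  move=> x; rewrite /= !in_itv /= => /andP[h1 h2].
  by rewrite (lt_le_trans su (le_trans um h1)) (le_lt_trans (le_trans h2 Mw) ws).
have mgMM : measurable_fun `[m, M] (EFin \o g).
  apply: measurable_funS mg => //; exact: measurable_itv.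
have g0MM : forall x, `[m, M]%classic x -> (0 <= (EFin \o g) x)%E.
  by move=> x /sub1 /inO_itv hx; rewrite lee_fin hg0.
apply: (le_trans (@ge0_subset_integral _ _ _ mu T `[m, M]%classic mT (measurable_itv _) (EFin \o g) mgMM g0MM subT)).
move: mM; rewrite le_eqVlt => /predU1P[<-|mM].
  by rewrite set_itv1 integral_set1 lee_fin.
have inOmM : forall x, m <= x <= M -> inO s0 s1 x.
  by move=> x /andP[h1 h2]; apply: inOu; rewrite (le_trans um h1) (le_trans h2 Mw).
rewrite (@continuous_FTC2 R g G m M mM).
- rewrite -EFinD lee_fin.
  apply/ler_addgt0Pr => e e0.
  have e2 : 0 < e / 2 by rewrite divr_gt0.
  have Gc : forall x, inO s0 s1 x -> {for x, continuous G}.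
    by move=> x hx; apply: der_cont; have h := hG hx; exact: (@ex_derive _ _ _ _ _ _ _ h).
  have hm : inO s0 s1 m by apply: inOmM; rewrite lexx ltW.
  have hM : inO s0 s1 M by apply: inOmM; rewrite lexx ltW.
  have [dl dl0 hdl] := cont_eps (Gc m hm) e2.
  have [dr dr0 hdr] := cont_eps (Gc M hM) e2.
  have key : forall t v, T t -> T v -> t <= v -> `|m - t| < dl -> `|M - v| < dr ->
      G M - G m <= c + e.
    move=> t v Tt Tv tv h1 h2.
    have [ht St _] := Tin t Tt.
    have [hv Sv _] := Tin v Tv.
    have h3 := hS ht hv St Sv tv.
    have := hdl t h1; have := hdr v h2.
    rewrite !ltr_norml => /andP[h4 h5] /andP[h6 h7]; lra.
  have hinf : has_inf T by split.
  have hsup : has_sup T by split.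
  have [t Tt tlt] := inf_adherent dl0 hinf.
  have [v Tv vgt] := sup_adherent dr0 hsup.
  have tlt' : t < m + dl := tlt.
  have vgt' : M - dr < v := vgt.
  clear tlt vgt.
  have mt := mle t Tt; have mv := mle v Tv; have tM := Mge t Tt; have vM := Mge v Tv.
  case: (leP t v) => tv.
  + apply: (key t v Tt Tv tv); rewrite ltr_norml; apply/andP; split; lra.
  + apply: (key v t Tv Tt (ltW tv)); rewrite ltr_norml; apply/andP; split; lra.
- apply: continuous_in_subspaceT => x; rewrite inE /= in_itv /= => hx.
  exact: hgc (inOmM x hx).
- have Gc : forall x, inO s0 s1 x -> {for x, continuous G}.
    by move=> x hx; apply: der_cont; have h := hG hx; exact: (@ex_derive _ _ _ _ _ _ _ h).
  have hm : inO s0 s1 m by apply: inOmM; rewrite lexx ltW.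
  have hM : inO s0 s1 M by apply: inOmM; rewrite lexx ltW.
  split.
  + move=> x; rewrite in_itv /= => hx.
    have h := hG (inOmM x (ltW_and' hx)); exact: (@ex_derive _ _ _ _ _ _ _ h).
  + exact: cvg_at_right_filter (Gc m hm).
  + exact: cvg_at_left_filter (Gc M hM).
- move=> x; rewrite in_itv /= => hx.
  have h := hG (inOmM x (ltW_and' hx)); rewrite derive1E; exact: (@derive_val _ _ _ _ _ _ _ h).
Qed.



Lemma I2 : (\int[mu]_(x in `]s0, s1[ `&` S) (g x)%:E <= c%:E)%E.
Proof.
set D := `]s0, s1[ `&` S.
set d := s1 - s0.
have d0 : 0 < d by rewrite /d subr_gt0.
pose eta (n : nat) := d / (n.+2)%:R.
have etaN : forall n, eta n * (n.+2)%:R = d by move=> n; rewrite /eta divfK // pnatr_eq0.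
have eta0 : forall n, 0 < eta n by move=> n; rewrite /eta divr_gt0 // ltr0n.
have eta2 : forall n, 2 * eta n <= d.
  move=> n; have := etaN n; have := eta0 n; have : 2 <= (n.+2)%:R :> R by rewrite ler_nat.
  move=> h1 h2 h3; nra.
have etand : forall n m, (n <= m)%N -> eta m <= eta n.
  move=> n m nm; have := etaN n; have := etaN m; have := eta0 n; have := eta0 m.
  have : (n.+2)%:R <= (m.+2)%:R :> R by rewrite ler_nat ltnS ltnS.
  have : 0 < (n.+2)%:R :> R by rewrite ltr0n.
  move=> h0 h1 h2 h3 h4 h5; nra.
pose u n := s0 + eta n.
pose w n := s1 - eta n.
pose g' (n : nat) := ((EFin \o g) \_ `[u n, w n]%classic).
have g'E : forall n x, g' n x = if u n <= x <= w n then (g x)%:E else 0%E.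
  by move=> n x; rewrite /g' patchE mem_setE in_itv.
have DO : forall x, D x -> inO s0 s1 x by move=> x [/inO_itv].
have mg' : forall n, measurable_fun D (g' n).
  move=> n.
  have mI : measurable (`[u n, w n]%classic : set R) by exact: measurable_itv.
  have mO : measurable (`]s0, s1[%classic : set R) by exact: measurable_itv.
  have H := (measurable_restrict (EFin \o g) mI mS).1; apply: H.
  apply: (measurable_funS mO _ mg).
  by move=> x [[]].
have g'0 : forall n x, D x -> (0 <= g' n x)%E.
  by move=> n x Dx; rewrite g'E; case: ifP => // _; rewrite lee_fin hg0 // DO.
have ndg' : forall x, D x -> nondecreasing_seq (g'^~ x).
  move=> x Dx n m nm; rewrite !g'E.
  case: ifP => [/andP[h1 h2]|_]; last by case: ifP => // _; rewrite lee_fin hg0 // DO.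
  have := etand _ _ nm => h.
  by rewrite ifT //; apply/andP; split; rewrite /u /w in h1 h2 *; lra.
have lim_g' : forall x, D x -> limn (g'^~ x) = (g x)%:E.
  move=> x Dx; apply/cvg_lim => //; apply: cvg_near_cst.
  have /andP[x0 x1] := DO x Dx.
  set r := Num.min (x - s0) (s1 - x).
  have r0 : 0 < r by rewrite lt_min !subr_gt0 x0 x1.
  have rd : 0 < r / d by rewrite divr_gt0.
  have [N0 _ hN0] := near_infty_natSinv_lt (PosNum rd).
  exists N0 => // n /= hn; rewrite g'E ifT //.
  have := hN0 n hn; rewrite /= => hlt.
  have e1 : eta n <= d * (n.+1)%:R^-1.
    rewrite /eta ler_pM2l // lef_pV2 ?ler_nat ?posrE ?ltr0n //.
  have e2 : d * (n.+1)%:R^-1 < d * (r / d) by rewrite ltr_pM2l.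
  have e3 : d * (r / d) = r by rewrite mulrC divfK // gt_eqF.
  have rx1 : r <= x - s0 by rewrite ge_min lexx.
  have rx2 : r <= s1 - x by rewrite ge_min lexx orbT.
  have er : eta n < r by rewrite -e3; exact: le_lt_trans e1 e2.
  have h1 := lt_le_trans er rx1; have h2 := lt_le_trans er rx2.
  clear e1 e2 e3 rx1 rx2 er hlt.
  rewrite /u /w; apply/andP; split; lra.
have bnd : forall n, (\int[mu]_(x in D) g' n x <= c%:E)%E.
  move=> n; rewrite /g' -integral_mkcondr.
  have := eta2 n; have := eta0 n; rewrite /d => h1 h2.
  by apply: I1; rewrite /u /w; lra.
have -> : (\int[mu]_(x in D) (g x)%:E = \int[mu]_(x in D) limn (g'^~ x))%E.
  by apply: eq_integral => x /set_mem Dx; rewrite lim_g'.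
rewrite (@monotone_convergence _ _ _ mu D mS g' mg' g'0 ndg').
apply: lime_le; last by apply: nearW => n; exact: bnd.
exact: (cvgP _ (@cvg_monotone_convergence _ _ _ mu D mS g' mg' g'0 ndg')).
Qed.

End LemI.
End P4.

Set Implicit Arguments.
Unset Strict Implicit.
Unset Printing Implicit Defensive.

Section P5.
Variable R : realType.
Notation mu := (@lebesgue_measure R).
Local Open Scope ereal_scope.

Lemma sub_add (O : set R) (f : R -> \bar R) (P : pred nat) (Sn : nat -> set R) :
  measurable O -> measurable_fun O f -> (forall x, O x -> 0 <= f x) ->
  (forall n, measurable (O `&` Sn n)) ->
  \int[mu]_(x in O `&` \bigcup_(i in [set i | P i]) Sn i) f x <=
  \sum_(i <oo | P i) \int[mu]_(x in O `&` Sn i) f x.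
Proof.
move=> mO mf f0 mS.
set U := \bigcup_(i in [set i | P i]) Sn i.
have mOU : measurable (O `&` U).
  by rewrite /U setI_bigcupr; apply: bigcup_measurable => k _; exact: mS.
have eOU : O `&` U = O `&` (O `&` U) by rewrite setIA setIid.
rewrite eOU integral_mkcondr.
pose h n := if P n then f \_ (O `&` Sn n) else cst 0.
have mfOU : measurable_fun O (f \_ (O `&` U)).
  have H := (measurable_restrict f mOU mO).1; apply: H.
  by apply: measurable_funS mf => //; rewrite -setIA; exact: subIsetl.
have mh : forall n, measurable_fun O (h n).
  move=> n; rewrite /h; case: (P n); last exact: measurable_cst.
  have H := (measurable_restrict f (mS n) mO).1; apply: H.
  by apply: measurable_funS mf => //; rewrite setIA setIid; exact: subIsetl.
have h0 : forall n x, O x -> 0 <= h n x.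
  move=> n x Ox; rewrite /h; case: (P n) => //=.
  by rewrite patchE; case: ifP => // _; exact: f0.
have msum : measurable_fun O (fun x => \sum_(n <oo) h n x).
  have := @ge0_emeasurable_sum _ _ _ O h xpredT (fun k x Ox _ => h0 k x Ox) (fun k _ => mh k).
  by apply: eq_measurable_fun => x _.
apply: (@le_trans _ _ (\int[mu]_(x in O) \sum_(n <oo) h n x)).
  apply: ge0_le_integral => //.
  - move=> x Ox; rewrite patchE; case: ifP => // _; exact: f0.
  - move=> x Ox; rewrite patchE; case: ifP => [/set_mem [_ [k Pk Sk]]|_]; last first.
      by apply: nneseries_ge0 => n _ _; exact: h0.
    rewrite (@nneseriesD1 _ (h^~ x) k xpredT) //; last by move=> n _; exact: h0.
    have -> : h k x = f x by rewrite /h Pk patchE mem_set.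
    rewrite leeDl //; apply: nneseries_ge0 => n _ _; exact: h0.
rewrite integral_nneseries //.
rewrite [X in _ <= X]eseries_mkcond; apply: lee_nneseries.
  by move=> n _ _; apply: integral_ge0 => x Ox; exact: h0.
move=> n _; rewrite /h; case: (P n).
  by rewrite -integral_mkcondr setIA setIid.
by rewrite integral0.
Qed.

End P5.

Set Implicit Arguments.
Unset Strict Implicit.
Unset Printing Implicit Defensive.

Section P6.
Variable R : realType.

Lemma dist_same (p q : R * R) : p.2 = q.2 -> dist2 p q = `|p.1 - q.1|.
Proof. by move=> h; rewrite /dist2 h subrr expr0n /= addr0 sqrtr_sqr. Qed.

Lemma Q0y (y : R) : 0 <= y <= 1 -> Qsq (0, y).
Proof. by move=> hy; split => //=; rewrite lexx ler01. Qed.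

Section Rect.
Variables (alpha : R) (a b : R -> R).
Hypothesis hr : rect_sides alpha a b.

Lemma r_ab y : 0 <= y <= 1 -> [/\ 0 <= a y, a y < b y & b y <= 1].
Proof. by case: hr => _ _ _ h /h [h1 [h2 h3]]. Qed.

Lemma r_delta (z : R * R) : 0 <= z.2 <= 1 ->
  delta z (curvrect a b) = b z.2 - a z.2.
Proof.
move=> hz; have [h1 h2 h3] := r_ab hz.
rewrite /delta /diam2.
set X := [set _ | _ in _].
have ub : ubound X (b z.2 - a z.2).
  move=> r [[p q] [[/= hp [_ /andP[p1 p2]]] [/= hq [_ /andP[q1 q2]]]] <-] /=.
  rewrite dist_same; last by rewrite hp hq.
  rewrite hp in p1 p2; rewrite hq in q1 q2.
  rewrite ler_norml; apply/andP; split; lra.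
have mem : X (b z.2 - a z.2).
  have Sb : (hline z `&` curvrect a b) (b z.2, z.2).
    by split => //=; split => //; rewrite lexx ltW.
  have Sa : (hline z `&` curvrect a b) (a z.2, z.2).
    by split => //=; split => //; rewrite lexx ltW.
  exists ((b z.2, z.2), (a z.2, z.2)); first by split.
  by rewrite dist_same //= gtr0_norm // subr_gt0.
apply/eqP; rewrite eq_le; apply/andP; split.
- by apply: ge_sup => //; exists (b z.2 - a z.2).
- by apply: ub_le_sup => //; exists (b z.2 - a z.2).
Qed.

Lemma r_delta_ub (z : R * R) : Qsq z -> delta z (curvrect a b) <= 1.
Proof.
move=> [_ hz]; rewrite r_delta //; have [h1 h2 h3] := r_ab hz; lra.
Qed.

Lemma r_max y : 0 <= y <= 1 -> b y - a y <= delta_max (curvrect a b).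
Proof.
move=> hy; rewrite /delta_max.
have -> : b y - a y = delta (0, y) (curvrect a b) by rewrite r_delta.
apply: ub_le_sup; last by exists (0, y) => //; exact: Q0y.
by exists 1 => r [z Qz <-]; exact: r_delta_ub.
Qed.

Lemma r_max0 : 0 <= delta_max (curvrect a b).
Proof.
have h : 0 <= (0:R) <= 1 by apply/andP; split => //; exact: ler01.
apply: le_trans (r_max h); have [h1 h2 h3] := r_ab h; lra.
Qed.

Lemma r_min_le : delta_min (curvrect a b) <= b (1/2) - a (1/2).
Proof.
have hy : 0 <= (1/2:R) <= 1 by apply/andP; split; lra.
rewrite /delta_min.
have -> : b (1/2) - a (1/2) = delta (0, 1/2) (curvrect a b) by rewrite r_delta.
apply: ge_inf; last by exists (0, 1/2) => //; exact: Q0y.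
exists 0 => r [z [_ hz] <-]; rewrite r_delta //; have [h1 h2 h3] := r_ab hz; lra.
Qed.

Lemma r_min_gt0 : 0 < delta_min (curvrect a b).
Proof.
have [sa sb _ _] := hr.
have c01 : {within `[0, 1], continuous (fun y => b y - a y)}.
  apply: continuous_in_subspaceT => y _.
  apply: continuousB; apply: der_cont; [exact: (sb 0%N y) | exact: (sa 0%N y)].
have [c hc hmin] := EVT_min ler01 c01.
have hc' : 0 <= c <= 1 by move: hc; rewrite in_itv.
have [_ h2 _] := r_ab hc'.
apply: (lt_le_trans (_ : 0 < b c - a c)); first by rewrite subr_gt0.
apply: lb_le_inf; first by exists (delta (0,0) (curvrect a b)); exists (0, 0) => //; apply: Q0y; apply/andP; split => //; exact: ler01.
move=> r [z [_ hz] <-]; rewrite r_delta //; apply: hmin; rewrite in_itv /=; exact: hz.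
Qed.

Lemma r_min_le1 : delta_min (curvrect a b) <= 1.
Proof.
apply: le_trans r_min_le _.
have hy : 0 <= (1/2:R) <= 1 by apply/andP; split; lra.
have [h1 h2 h3] := r_ab hy; lra.
Qed.

Lemma r_interior : alpha < 1 -> a (1/2) <= 1/3 -> 2/3 <= b (1/2) ->
  (curvrect a b)° (1/2, 1/2).
Proof.
move=> al1 ha hb.
have [sa sb hd _] := hr.
have al0 : 0 <= alpha.
  have h0 : 0 <= (0:R) <= 1 by apply/andP; split => //; exact: ler01.
  have [h _] := hd 0 h0; exact: le_trans (normr_ge0 _) h.
have la := lip_side sa (fun y hy => (hd y hy).1).
have lb := lip_side sb (fun y hy => (hd y hy).2).
have e0 : (0:R) < 1/12 by lra.
rewrite /interior.
have := nbhsx_ballx ((1/2 : R), (1/2 : R)) (1/12) e0.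
apply: filterS; move=> [x y] [/= hx hy].
rewrite -ball_normE /= in hx hy.
have hy' : 0 <= y <= 1.
  by move: hy; rewrite ltr_norml => /andP[h1 h2]; apply/andP; split; lra.
have h12 : 0 <= (1/2:R) <= 1 by apply/andP; split; lra.
have h1 := la _ _ h12 hy'; have h2 := lb _ _ h12 hy'.
have h3 : alpha * `|y - 1/2| <= `|y - 1/2|.
  by have := normr_ge0 (y - 1/2); nra.
rewrite distrC in hy.
have hyn := hy.
move: h1 h2 hx hy h3; rewrite !ler_norml !ltr_norml => /andP[h4 h5] /andP[h6 h7] /andP[h8 h9] /andP[h10 h11] h3.
split => //=; apply/andP; split; lra.
Qed.

End Rect.
End P6.

Set Implicit Arguments.
Unset Strict Implicit.
Unset Printing Implicit Defensive.

Section P7.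
Variable R : realType.
Notation mu := (@lebesgue_measure R).

Lemma meas_ge0 (s0 s1 : R) (phi : R -> R) :
  (forall x, inO s0 s1 x -> {for x, continuous phi}) ->
  measurable (`]s0, s1[%classic `&` [set t | 0 <= phi t]).
Proof.
move=> hc.
have mphi : measurable_fun `]s0, s1[%classic phi.
  apply: open_continuous_measurable_fun; first exact: itv_open.
  by move=> x; rewrite inE /= in_itv /= => hx; apply: hc.
have := mphi (measurable_itv _) `[0, +oo[%classic (measurable_itv _).
congr measurable; apply/seteqP; split => t [h1 h2]; split => //=.
- by move: h2; rewrite /= in_itv /= andbT.
- by rewrite /= in_itv /= andbT.
Qed.

Section C.
Variables (alpha s0 s1 : R) (gx gy : R -> R).
Hypothesis al : 0 < alpha < 1.
Hypothesis hK : Ku_curve alpha s0 s1 gx gy.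

Lemma cont_side (a : R -> R) : smooth a -> forall x, inO s0 s1 x ->
  {for x, continuous (fun t => a (gy t))}.
Proof.
move=> sa x hx; apply: (@continuous_comp _ _ _ gy a x).
- by apply: der_cont; exact: (K_dy hK).
- by apply: der_cont; exact: (sa 0%N).
Qed.

Lemma meas_rect (a b : R -> R) : smooth a -> smooth b ->
  measurable (`]s0, s1[%classic `&` [set t | curvrect a b (gx t, gy t)]).
Proof.
move=> sa sb.
have cx : forall x, inO s0 s1 x -> {for x, continuous gx}.
  by move=> x hx; apply: der_cont; exact: (K_dx hK).
have m1 := @meas_ge0 s0 s1 (fun t => gx t - a (gy t))
  (fun x hx => continuousB (cx x hx) (cont_side sa hx)).
have m2 := @meas_ge0 s0 s1 (fun t => b (gy t) - gx t)
  (fun x hx => continuousB (cont_side sb hx) (cx x hx)).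
have -> : `]s0, s1[%classic `&` [set t | curvrect a b (gx t, gy t)] =
   (`]s0, s1[%classic `&` [set t | 0 <= gx t - a (gy t)]) `&`
   (`]s0, s1[%classic `&` [set t | 0 <= b (gy t) - gx t]).
  apply/seteqP; split => t.
  - move=> [ht [/= hy /andP[h1 h2]]]; split; split => //=; rewrite subr_ge0 //.
  - move=> [[ht /= h1] [_ /= h2]]; split => //; split => /=.
    + have hO : inO s0 s1 t by move: ht; rewrite /= in_itv.
      by have [_ ] := K_Q hK hO.
    + by apply/andP; split; rewrite -subr_ge0.
exact: measurableI.
Qed.

Definition speed (x : R) := Num.sqrt (d1 gx x ^+ 2 + d1 gy x ^+ 2).

Lemma speed_cont x : inO s0 s1 x -> {for x, continuous speed}.
Proof.
move=> hx; apply: (@continuous_comp _ _ _ (fun x => d1 gx x ^+ 2 + d1 gy x ^+ 2) Num.sqrt x).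
  apply: continuousD; rewrite /GRing.exp /=; apply: continuousM;
  [exact: (K_cdx hK) | exact: (K_cdx hK) | exact: (K_cdy hK) | exact: (K_cdy hK)].
exact: sqrt_continuous.
Qed.


Lemma speed_le x sg : `|sg| = 1 -> 0 < sg * d1 gx x -> inO s0 s1 x ->
  speed x <= 2 * sg * d1 gx x + 0 * d1 gy x.
Proof.
move=> hsg1 hpos hx.
have e : sg * d1 gx x = `|d1 gx x|.
  by rewrite -[LHS]gtr0_norm // normrM hsg1 mul1r.
rewrite mul0r addr0 -mulrA e.
have hc := K_cone hK hx.
have al1 : alpha <= 1 by case/andP: al => _ h; exact: ltW.
have h1 : `|d1 gy x| <= `|d1 gx x|.
  apply: le_trans hc _; rewrite ler_piMl //; case/andP: al => h _; exact: ltW.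
have h2 : d1 gx x ^+ 2 + d1 gy x ^+ 2 <= (2 * `|d1 gx x|) ^+ 2.
  rewrite -[d1 gx x ^+ 2](real_normK (num_real _)) -[d1 gy x ^+ 2](real_normK (num_real _)).
  have := normr_ge0 (d1 gy x); nra.
rewrite /speed; apply: (le_trans (ler_wsqrtr h2)).
by rewrite sqrtr_sqr ger0_norm // mulr_ge0.
Qed.

Lemma arc_rect (a b : R -> R) : rect_sides alpha a b ->
  (arc_measure s0 s1 gx gy (curvrect a b) <=
     (2 * delta_max (curvrect a b) / (1 - alpha ^+ 2))%:E)%E.
Proof.
move=> hr; have [sa sb hd hab] := hr.
have [sg [hsg1 hsg]] := K_sign hK.
set W := delta_max (curvrect a b).
have a2 : 0 < 1 - alpha ^+ 2 by case/andP: al => h1 h2; nra.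
pose g x := 2 * sg * d1 gx x + 0 * d1 gy x.
pose G x := 2 * sg * gx x + 0 * gy x.
set S := [set t | curvrect a b (gx t, gy t)].
have mS : measurable (`]s0, s1[%classic `&` S) := meas_rect sa sb.
have gc : forall x, inO s0 s1 x -> {for x, continuous g}.
  move=> x hx; apply: continuousD; apply: continuousM;
  [exact: cst_continuous | exact: (K_cdx hK) | exact: cst_continuous | exact: (K_cdy hK)].
have mO : measurable (`]s0, s1[%classic : set R) by exact: measurable_itv.
have sub : `]s0, s1[%classic `&` S `<=` `]s0, s1[%classic by move=> x [].
have mspeed : measurable_fun (`]s0, s1[%classic `&` S) (EFin \o speed).
  apply: (measurable_funS mO sub); apply/measurable_EFinP.
  apply: open_continuous_measurable_fun; first exact: itv_open.
  by move=> x; rewrite inE /= in_itv /= => hx; apply: speed_cont.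
have mgf : measurable_fun (`]s0, s1[%classic `&` S) (EFin \o g).
  apply: (measurable_funS mO sub); apply/measurable_EFinP.
  apply: open_continuous_measurable_fun; first exact: itv_open.
  by move=> x; rewrite inE /= in_itv /= => hx; apply: gc.
have inOS : forall x, (`]s0, s1[%classic `&` S) x -> inO s0 s1 x.
  by move=> x [hx _]; move: hx; rewrite /= in_itv.
rewrite /arc_measure.
apply: (@le_trans _ _ (\int[mu]_(x in `]s0, s1[%classic `&` S) (g x)%:E)%E).
  apply: ge0_le_integral => //.
  - by move=> x /inOS hx; rewrite lee_fin; apply: speed_le => //; apply: hsg.
apply: (@I2 _ s0 s1 _ G g S (K_lt hK)) => //.
- move=> x hx; apply: is_der_lin; apply: der_is; [exact: (K_dx hK) | exact: (K_dy hK)].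
- move=> x hx; rewrite /g mul0r addr0 -mulrA; apply: mulr_ge0 => //; exact: ltW (hsg x hx).
- move=> t v ht hv St Sv tv.
  have la : forall p q, 0 <= p <= 1 -> 0 <= q <= 1 -> `|a q - a p| <= alpha * `|q - p|.
    by move=> p q hp hq; apply: (lip_side sa (fun y hy => (hd y hy).1)).
  have hW : forall y, 0 <= y <= 1 -> b y - a y <= W by move=> y hy; exact: (r_max hr hy).
  have h := rect_bound al hK hsg1 hsg la hW ht hv St Sv.
  have h2 : sg * (gx v - gx t) <= `|gx v - gx t|.
    by rewrite (le_trans (ler_norm _)) // normrM hsg1 mul1r.
  have e : G v - G t = 2 * (sg * (gx v - gx t)) by rewrite /G; ring.
  rewrite e ler_pdivlMr //.
  have := normr_ge0 (gx v - gx t); nra.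
- apply: divr_ge0; last exact: ltW.
  by apply: mulr_ge0 => //; exact: (r_max0 hr).
Qed.

End C.
End P7.

Unset Implicit Arguments.
Set Strict Implicit.

Theorem lemma10p5 (R : realType) (alpha : R) (a b : nat -> R -> R) :
  0 < alpha < 1 ->
  (forall i, rect_sides alpha (a i) (b i)) ->
  (* (G1) interiors pairwise disjoint *)
  (forall i j, i <> j ->
     (curvrect (a i) (b i))° `&` (curvrect (a j) (b j))° = set0) ->
  (* (G2) Q minus the union of interiors is Lebesgue-null *)
  ((@lebesgue_measure R) \x (@lebesgue_measure R))%E.-negligible
     (@Qsq R `\` \bigcup_i (curvrect (a i) (b i))°) ->
  (* (G3) *)
  (\sum_(0 <= i <oo)
     (- (delta_max (curvrect (a i) (b i)) *
         ln (delta_min (curvrect (a i) (b i)))))%:E < +oo)%E ->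
  forall eps : R, 0 < eps ->
  exists N : nat, (0 < N)%N /\
    forall (s0 s1 : R) (gx gy : R -> R),
      Ku_curve alpha s0 s1 gx gy ->
      (arc_measure s0 s1 gx gy
         (\bigcup_(i in [set i | (N <= i)%N]) curvrect (a i) (b i)) < eps%:E)%E.
Proof.
move=> hal hrs G1 _ G3 eps heps.
pose dM i := delta_max (curvrect (a i) (b i)).
pose dm i := delta_min (curvrect (a i) (b i)).
pose r i := - (dM i * ln (dm i)).
have hdM0 : forall i, 0 <= dM i by move=> i; exact: (r_max0 (hrs i)).
have hdm0 : forall i, 0 < dm i by move=> i; exact: (r_min_gt0 (hrs i)).
have hdm1 : forall i, dm i <= 1 by move=> i; exact: (r_min_le1 (hrs i)).
have hr0 : forall i, 0 <= r i.
  move=> i; rewrite /r oppr_ge0; apply: mulr_ge0_le0 => //; exact: ln_le0.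
have al1 : alpha < 1 by case/andP: hal.
have two_bad : forall i j, i <> j -> 2/3 <= dm i -> 2/3 <= dm j -> False.
  move=> i j hij hi hj.
  have h12 : 0 <= (1/2 : R) <= 1 by apply/andP; split; lra.
  have int : forall k, 2/3 <= dm k -> (curvrect (a k) (b k))° (1/2, 1/2).
    move=> k hk; have := r_min_le (hrs k); have [h1 h2 h3] := r_ab (hrs k) h12.
    rewrite -/(dm k) => h4.
    apply: r_interior => //; lra.
  have : ((curvrect (a i) (b i))° `&` (curvrect (a j) (b j))°) (1/2, 1/2).
    by split; apply: int.
  by rewrite G1.
set L := - ln (2/3 : R).
have L0 : 0 < L.
  by rewrite /L oppr_gt0; apply: ln_lt0; apply/andP; split; lra.
have good : forall i, dm i < 2/3 -> dM i * L <= r i.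
  move=> i hi.
  have e : r i = dM i * (- ln (dm i)) by rewrite /r mulrN.
  rewrite e; apply: ler_wpM2l => //.
  have p23 : (2/3 : R) \is Num.pos by rewrite posrE; lra.
  have pd : dm i \is Num.pos by rewrite posrE.
  have hl : ln (dm i) <= ln (2/3) by rewrite (ler_ln pd p23); exact: ltW.
  by rewrite /L lerN2.
have [N0 hN0] : exists N0, forall i, (N0 <= i)%N -> dm i < 2/3.
  case: (pselect (exists k, 2/3 <= dm k)) => [[k hk]|hno].
  - exists k.+1 => i hi; rewrite ltNge; apply/negP => hi'.
    by apply: (two_bad k i) => //; move=> ek; move: hi; rewrite ek ltnn.
  - exists 0%N => i _; rewrite ltNge; apply/negP => hi'.
    by apply: hno; exists i.
have a2 : 0 < 1 - alpha ^+ 2 by case/andP: hal => h1 h2; nra.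
set K := 2 / ((1 - alpha ^+ 2) * L).
have K0 : 0 < K by rewrite /K divr_gt0 // mulr_gt0.
set eta := eps / (2 * K).
have eta0 : 0 < eta by rewrite /eta divr_gt0 // mulr_gt0.
have ht := @nneseries_tail_cvg R (fun i => (r i)%:E) xpredT G3 (fun k _ => hr0 k).
have hnb : nbhs (0 : \bar R)%E [set y | (y < eta%:E)%E].
  apply: open_nbhs_nbhs; split; first exact: open_ereal_lt_ereal.
  by rewrite /= lte_fin.
have [N1 _ hN1] := ht _ hnb.
set N := maxn 1 (maxn N0 N1).
have NN0 : (N0 <= N)%N by rewrite /N leq_max leq_maxl orbT.
have NN1 : (N1 <= N)%N by rewrite /N leq_max leq_maxr orbT.
exists N; split; first by rewrite /N leq_max ltnSn.
move=> s0 s1 gx gy hK.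
rewrite /arc_measure.
set O := `]s0, s1[%classic.
pose f := fun t => (Num.sqrt (d1 gx t ^+ 2 + d1 gy t ^+ 2))%:E.
have mO : measurable (O : set R) by exact: measurable_itv.
have mf : measurable_fun O f.
  apply/measurable_EFinP; apply: open_continuous_measurable_fun; first exact: itv_open.
  by move=> x; rewrite inE /O /= in_itv /= => hx; exact: (speed_cont hK hx).
have f0 : forall x, O x -> (0 <= f x)%E by move=> x _; rewrite lee_fin sqrtr_ge0.
have mSn : forall n, measurable (O `&` [set t | curvrect (a n) (b n) (gx t, gy t)]).
  by move=> n; have [sa sb _ _] := hrs n; exact: (meas_rect hK sa sb).
have step1 := @sub_add R O f (fun i => (N <= i)%N)
  (fun i => [set t | curvrect (a i) (b i) (gx t, gy t)]) mO mf f0 mSn.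
apply: (le_lt_trans step1).
apply: (@le_lt_trans _ _ (\sum_(i <oo | (N <= i)%N) ((K * r i)%:E))%E).
  apply: lee_nneseries.
  - move=> i _ _; apply: integral_ge0 => x [Ox _]; exact: f0.
  - move=> i hi; apply: (le_trans (arc_rect hal hK (hrs i))); rewrite lee_fin.
    have hg := good i (hN0 i (leq_trans NN0 hi)).
    have e : K * (dM i * L) = 2 * dM i / (1 - alpha ^+ 2).
      rewrite /K; field; rewrite gt_eqF //=; apply: lt0r_neq0; exact: L0.
    by rewrite -e; apply: ler_wpM2l => //; exact: ltW.
under eq_eseriesr do rewrite EFinM.
rewrite nneseriesZl; last by move=> i _; rewrite lee_fin.
have -> : (\sum_(i <oo | (N <= i)%N) (r i)%:E = \sum_(N <= i <oo) (r i)%:E)%E.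
  by rewrite [RHS]eseries_cond; apply: eq_eseriesl => i.
have hT : (\sum_(N <= k <oo) (r k)%:E < eta%:E)%E by exact: (hN1 N NN1).
have T0 : (0 <= \sum_(N <= k <oo) (r k)%:E)%E.
  by apply: nneseries_ge0 => n _ _; rewrite lee_fin.
apply: (le_lt_trans (lee_pmul _ T0 (lexx K%:E) (ltW hT))).
  by rewrite lee_fin ltW.
rewrite -EFinM lte_fin /eta.
have -> : K * (eps / (2 * K)) = eps / 2.
  by field; rewrite gt_eqF //=; apply: lt0r_neq0; exact: K0.
lra.
Qed.
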